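(* Let $K$ be a field of characteristic $p>0$, $R=K[x_0,\dots,x_n]$, $\mathfrak{m}=(x_0,\dots,x_n)$, $q=p^e$ and $\mathfrak{m}^{[q]}=(x_0^q,\dots,x_n^q)$. Let $d$ be a positive integer. Then \[\mathfrak{m}^{[q]}:_R\mathfrak{m}^{(n+1)(d-2)+1}\subseteq\mathfrak{m}^{[q]}+\mathfrak{m}^{(n+1)(q-d+1)},\] where $\mathfrak{m}^i=R$ for $i\leqslant0$. *)

(* Defs.v *)
From HB Require Import structures.
From mathcomp Require Import all_boot all_algebra.
From mathcomp Require Import mpoly.
Set Implicit Arguments. Unset Strict Implicit. Unset Printing Implicit Defensive.
Import GRing.Theory Num.Theory.
Local Open Scope ring_scope.

Definition ideal_gen (K : fieldType) (n : nat) (S : {mpoly K[n]} -> Prop)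
  (f : {mpoly K[n]}) : Prop :=
  exists s : seq ({mpoly K[n]} * {mpoly K[n]}),
    (forall c, c \in s -> S c.2) /\ f = \sum_(c <- s) c.1 * c.2.

Definition frob_max (K : fieldType) (n q : nat) : {mpoly K[n]} -> Prop :=
  ideal_gen (fun g => exists i : 'I_n, g = 'X_i ^+ q).

Definition max_pow (K : fieldType) (n : nat) (i : int) : {mpoly K[n]} -> Prop :=
  if (i <= 0)%R then (fun _ => True)
  else ideal_gen (fun g => exists m : 'X_{1..n}, mdeg m = `|i|%N /\ g = 'X_[m]).

Definition ideal_add (K : fieldType) (n : nat) (I J : {mpoly K[n]} -> Prop)
  (f : {mpoly K[n]}) : Prop :=
  exists a b, I a /\ J b /\ f = a + b.

Definition ideal_colon (K : fieldType) (n : nat) (I J : {mpoly K[n]} -> Prop)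
  (f : {mpoly K[n]}) : Prop :=
  forall g, J g -> I (f * g).

(* Main.v *)
Require Import Defs.
From HB Require Import structures.
From mathcomp Require Import all_boot all_algebra.
From mathcomp Require Import mpoly.
From mathcomp Require Import zify.
Import GRing.Theory Num.Theory.
Local Open Scope ring_scope.

Lemma sub_deg (n : nat) (c : 'X_{1..n}) (k : nat) :
  (k <= mdeg c)%N -> exists b : 'X_{1..n}, (b <= c)%MM /\ mdeg b = k.
Proof.
elim: k => [|k IH] hk.
  by exists 0%MM; split; [apply/mnm_lepP=> i; rewrite mnm0E | rewrite mdeg0].
have [b [hb db]] := IH (ltnW hk).
have [i hi] : exists i, (b i < c i)%N.
  apply/existsP; rewrite -[X in is_true X]negbK; apply/negP; rewrite negb_exists.
  move/forallP=> H.
  have : (mdeg c <= mdeg b)%N.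
    rewrite !mdegE; apply: leq_sum => j _; by rewrite leqNgt (H j).
  by rewrite db leqNgt hk.
exists (b + U_(i))%MM; split; last by rewrite mdegD mdeg1 db addn1.
apply/mnm_lepP=> j; rewrite mnmDE mnm1E.
case: (eqVneq i j) => [<-|_]; first by rewrite addn1.
by rewrite addn0; apply/mnm_lepP.
Qed.

Section IG.
Variables (K : fieldType) (n : nat) (S : {mpoly K[n]} -> Prop).

Lemma ig0 : ideal_gen S 0.
Proof. by exists [::]; split => //; rewrite big_nil. Qed.

Lemma igD a b : ideal_gen S a -> ideal_gen S b -> ideal_gen S (a + b).
Proof.
move=> [s1 [h1 ->]] [s2 [h2 ->]]; exists (s1 ++ s2); split; last by rewrite big_cat.
by move=> c; rewrite mem_cat => /orP [] ?; [apply: h1|apply: h2].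
Qed.

Lemma igM c g : S g -> ideal_gen S (c * g).
Proof. by move=> hg; exists [:: (c, g)]; split; [move=> x; rewrite inE => /eqP ->|rewrite big_seq1]. Qed.

Lemma igsum (I : eqType) (r : seq I) (P : pred I) F :
  (forall i, P i -> ideal_gen S (F i)) -> ideal_gen S (\sum_(i <- r | P i) F i).
Proof.
move=> H; elim: r => [|x r IH]; first by rewrite big_nil; apply: ig0.
rewrite big_cons; case: ifP => Px //; exact: igD (H _ Px) IH.
Qed.
End IG.

Lemma frob_coef (K : fieldType) (n q : nat) (h : {mpoly K[n]}) :
  frob_max q h -> forall m : 'X_{1..n}, (forall i, m i < q)%N -> h@_m = 0.
Proof.
move=> [s [hs ->]] m hm; rewrite raddf_sum /= big_seq; apply: big1 => c /hs [i ->].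
apply/memN_msupp_eq0; rewrite mpolyXn (perm_mem (msuppMX _ _)).
apply/negP => /mapP [m' _ em]; move: (hm i); rewrite em mnmDE mulmnE mnm1E eqxx mul1n.
by rewrite ltnNge leq_addr.
Qed.

Theorem lemma3p2 (K : fieldType) (p : nat) (hp : prime p) (hchar : p \in [pchar K])
  (n e d : nat) (hd : (0 < d)%N) :
  forall f : {mpoly K[n.+1]},
    ideal_colon (@frob_max K n.+1 (p ^ e))
                (@max_pow K n.+1 ((n.+1)%:Z * (d%:Z - 2) + 1)) f ->
    ideal_add (@frob_max K n.+1 (p ^ e))
              (@max_pow K n.+1 ((n.+1)%:Z * ((p ^ e)%:Z - d%:Z + 1))) f.
Proof.
move=> f.
have : (0 < (p ^ e)%N)%N by rewrite expn_gt0 prime_gt0.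
move: (p ^ e)%N => q hq H.
set k := ((n.+1)%:Z * (d%:Z - 2) + 1).
set s := ((n.+1)%:Z * (q%:Z - d%:Z + 1)).
have C : forall a, a \in msupp f -> ~~ [exists i, (q <= a i)%N] -> s <= (mdeg a)%:Z.
  move=> a ha; rewrite negb_exists => /forallP hnq.
  have hlt : forall i, (a i < q)%N by move=> i; rewrite ltnNge (hnq i).
  have [//|hsm] := lerP s (mdeg a)%:Z.
  pose c : 'X_{1..n.+1} := [multinom (q.-1 - a i)%N | i < n.+1].
  have dc : (mdeg c + mdeg a = n.+1 * q.-1)%N.
    rewrite !mdegE -big_split /=.
    rewrite (eq_bigr (fun _ => q.-1)); last first.
      by move=> i _; rewrite mnmE subnK //; have := hlt i; lia.
    by rewrite sum_nat_const card_ord.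
  pose kk := if k <= 0 then 0%N else `|k|%N.
  have hkk : (kk <= mdeg c)%N.
    rewrite /kk; case: ifP => hk //.
    move/negbT: hk; rewrite /k => hk; move: hsm; rewrite /s; nia.
  have [b [hb db]] := @sub_deg _ _ _ hkk.
  have Hb := H 'X_[b].
  have : @max_pow K n.+1 k 'X_[b].
    rewrite /max_pow; case: ifP => hk //.
    rewrite -[X in ideal_gen _ X]mul1r; apply: igM; exists b; split => //.
    by rewrite db /kk hk.
  move/Hb => /frob_coef hf.
  have hba : forall i, ((b + a)%MM i < q)%N.
    move=> i; rewrite mnmDE; have := mnm_lepP hb i; rewrite mnmE; have := hlt i; lia.
  have := hf (b + a)%MM hba.
  rewrite mcoeffMX => hh.
  have ne : f@_a != 0 by rewrite mcoeff_eq0 ha.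
  by rewrite hh eqxx in ne.
rewrite [X in ideal_add _ _ X]mpolyE big_seq (bigID (fun a : 'X_{1..n.+1} => [exists i, (q <= a i)%N])) /=.
eexists; eexists; split; last split; last reflexivity.
  apply: igsum => a /andP [_ /existsP [i hi]].
  have -> : 'X_[a] = 'X_[a - U_(i) *+ q] * 'X_i ^+ q :> {mpoly K[n.+1]}.
    rewrite mpolyXn -mpolyXD submK //; apply/mnm_lepP => j; rewrite mulmnE mnm1E.
    by case: eqVneq => [<-|]; rewrite ?mul1n ?mul0n.
  by rewrite scalerAl; apply: igM; exists i.
rewrite /max_pow; case: ifP => hs //.
apply: igsum => a /andP [ha hP].
have Ca := C a ha hP.
have hle : (`|s|%N <= mdeg a)%N by move/negbT: hs; move: Ca; lia.
have [b [hb db]] := @sub_deg _ _ _ hle.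
have -> : 'X_[a] = 'X_[a - b] * 'X_[b] :> {mpoly K[n.+1]} by rewrite -mpolyXD submK.
by rewrite scalerAl; apply: igM; exists b.
Qed.
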